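(* For every positive integer $\gamma$ there exist infinitely many finite groups $G$ (pairwise non-isomorphic) having exactly $d(|G|)+\gamma$ cyclic subgroups; for instance, for every integer $u\ge1$, the group $G=C_3\rtimes C_{2^u 5^{\gamma-1}}$, where a generator of $C_{2^u5^{\gamma-1}}$ acts on $C_3$ by inversion, has this property.
   Context: $C_k$ denotes the cyclic group of order $k$; $d(k)$ denotes the number of positive divisors of $k$. *)

(* Defs.v *)
From mathcomp Require Import all_boot all_fingroup all_solvable.
Set Implicit Arguments. Unset Strict Implicit. Unset Printing Implicit Defensive.

Definition ndivisors (k : nat) : nat := size (divisors k).

Definition ncyclic (gT : finGroupType) (G : {set gT}) : nat :=
  #|[set H : {group gT} | (H \subset G) && cyclic H]|.

Definition inv_sdprod_C3 (gT : finGroupType) (G K H : {group gT}) (h : gT)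
    (m : nat) : Prop :=
  (K ><| H = G)%g /\ cyclic K /\ #|K| = 3 /\ H = <[h]>%G :> {set gT} /\
  #[h]%g = m /\ (forall k, k \in K -> (k ^ h = k^-1)%g).

(* Main.v *)
Require Import Defs.
From mathcomp Require Import all_boot all_fingroup all_solvable.
From mathcomp Require Import zmodp zify.
Set Implicit Arguments. Unset Strict Implicit. Unset Printing Implicit Defensive.

Definition Dset n := [set d : 'I_n.+1 | d %| n].

Lemma ndivE n : 0 < n -> ndivisors n = #|Dset n|.
Proof.
move=> n0; rewrite /ndivisors cardE -(size_map val); apply: perm_size.
apply: uniq_perm; first exact: divisors_uniq.
  by rewrite map_inj_uniq ?enum_uniq //; apply: val_inj.
move=> d; rewrite -dvdn_divisors //; apply/idP/mapP => [dn|[e]].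
  have ltd : d < n.+1 by rewrite ltnS dvdn_leq.
  by exists (Ordinal ltd); rewrite // mem_enum inE.
by rewrite mem_enum inE => ? ->.
Qed.

Definition fmul a b (p : 'I_a.+1 * 'I_b.+1) : 'I_(a * b).+1 := inord (p.1 * p.2).
Arguments fmul : simpl never.
Arguments inord : simpl never.

Lemma DsetM a b : 0 < a -> 0 < b -> coprime a b ->
  #|Dset (a * b)| = #|Dset a| * #|Dset b|.
Proof.
move=> a0 b0 cab; rewrite -cardsX.
pose f := @fmul a b.
have fval p : p \in setX (Dset a) (Dset b) -> nat_of_ord (f p) = p.1 * p.2.
  by case: p => [d1 d2] _; rewrite /f /fmul inordK // ltnS leq_mul // -ltnS.
have -> : Dset (a * b) = f @: setX (Dset a) (Dset b).
  apply/setP => e; rewrite inE; apply/idP/imsetP => [ed|[p pD ->]].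
    have d1a : gcdn e a %| a by apply: dvdn_gcdr.
    have d1e : gcdn e a %| e by apply: dvdn_gcdl.
    have g0 : 0 < gcdn e a by rewrite gcdn_gt0 a0 orbT.
    have tb : e %/ gcdn e a %| b.
      rewrite -(dvdn_pmul2l g0) mulnC divnK // muln_gcdl dvdn_gcd ed andbT.
      by rewrite dvdn_mulr.
    have l1 : gcdn e a < a.+1 by rewrite ltnS dvdn_leq.
    have l2 : e %/ gcdn e a < b.+1 by rewrite ltnS dvdn_leq.
    exists (Ordinal l1, Ordinal l2); first by rewrite in_setX !inE d1a tb.
    have ee : gcdn e a * (e %/ gcdn e a) = e by rewrite mulnC divnK.
    apply: ord_inj; rewrite /f /fmul inordK; first exact: esym ee.
    by change (gcdn e a * (e %/ gcdn e a) < (a * b).+1); rewrite ee.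
  rewrite fval //; case: p pD => [d1 d2]; rewrite in_setX !inE => /andP[d1a d2b].
  exact: dvdn_mul.
rewrite card_in_imset // => p q pD qD /(congr1 (@nat_of_ord _)); rewrite !fval //.
move: p q pD qD => [d1 d2] [e1 e2]; rewrite !in_setX !inE => /andP[d1a d2b] /andP[e1a e2b] E.
have ga x y : x %| a -> y %| b -> gcdn a (x * y) = x.
  move=> xa yb; rewrite Gauss_gcdl; first exact/gcdn_idPr.
  by apply: coprime_dvdr yb _.
have gb x y : x %| a -> y %| b -> gcdn b (x * y) = y.
  move=> xa yb; rewrite Gauss_gcdr; first exact/gcdn_idPr.
  by apply: coprime_dvdr xa _; rewrite coprime_sym.
congr pair; apply: ord_inj.
  by rewrite -(ga _ _ d1a d2b) E ga.
by rewrite -(gb _ _ d1a d2b) E gb.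
Qed.

Lemma Dset_pexp p k : prime p -> #|Dset (p ^ k)| = k.+1.
Proof.
move=> pp; have p1 := prime_gt1 pp.
pose f (i : 'I_k.+1) : 'I_(p ^ k).+1 := inord (p ^ i).
have fval (i : 'I_k.+1) : nat_of_ord (f i) = p ^ i.
  by rewrite inordK // ltnS leq_pexp2l ?prime_gt0 // -ltnS.
have -> : Dset (p ^ k) = f @: [set: 'I_k.+1].
  apply/setP => e; rewrite inE; apply/idP/imsetP => [/(@dvdn_pfactor p e k pp) [i ik ei]|[i _ ->]].
    by exists (Ordinal (ik : i < k.+1)) => //; apply: ord_inj; rewrite fval.
  by rewrite fval dvdn_exp2l // -ltnS.
rewrite card_in_imset ?cardsT ?card_ord // => i j _ _ /(congr1 (@nat_of_ord _)).
by rewrite !fval => /(expnI p1) E; apply: ord_inj.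
Qed.

Lemma ndiv_formula u b : ndivisors (3 * (2 ^ u * 5 ^ b)) = 2 * (u.+1 * b.+1).
Proof.
have c3 : coprime 3 (2 ^ u * 5 ^ b) by rewrite coprimeMr !coprimeXr.
have c25 : coprime (2 ^ u) (5 ^ b) by rewrite coprimeXl // coprimeXr.
rewrite ndivE ?muln_gt0 ?expn_gt0 // DsetM ?muln_gt0 ?expn_gt0 //.
rewrite DsetM ?expn_gt0 //.
by rewrite !Dset_pexp // -[X in Dset X]/(3 ^ 1) (@Dset_pexp 3 1).
Qed.

Section Cyc.
Local Open Scope group_scope.
Lemma ncyc_sub (gT : finGroupType) (A : {group gT}) : cyclic A ->
  #|[set C : {group gT} | C \subset A]| = #|Dset #|A| |.
Proof.
move=> cA.
pose f (C : {group gT}) : 'I_(#|A|).+1 := inord #|C|.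
have fval (C : {group gT}) : C \subset A -> nat_of_ord (f C) = #|C|.
  by move=> CA; rewrite /f inordK // ltnS subset_leq_card.
have -> : Dset #|A| = f @: [set C : {group gT} | C \subset A].
  apply/setP => e; rewrite inE; apply/idP/imsetP => [ed|[C]].
    case/cyclicP: cA => a defA.
    have ea : (e %| #[a]%g)%N by rewrite orderE -defA.
    have := cycle_sub_group ea; set D := <[_]>%G => eD.
    have : D \in [set H0 : {group gT} | H0 \subset <[a]> & #|H0| == e] by rewrite eD set11.
    rewrite inE => /andP[DA /eqP De].
    exists D; first by rewrite inE defA.
    by apply: ord_inj; rewrite fval ?De // defA.
  by rewrite inE => CA ->; rewrite fval // cardSg.
rewrite card_in_imset // => C D; rewrite !inE => CA DA /(congr1 (@nat_of_ord _)).
rewrite !fval // => /eqP; rewrite -(eq_subG_cyclic cA CA DA) => /eqP E.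
exact: val_inj.
Qed.
End Cyc.

Section Count.
Variables (gT : finGroupType) (G K H : {group gT}) (h : gT) (u b : nat).
Hypotheses (sdp : (K ><| H = G)%g) (oK : #|K| = 3)
  (eH : H = <[h]>%G :> {set gT}) (oh : #[h]%g = 2 ^ u.+1 * 5 ^ b)
  (inv : forall k, k \in K -> (k ^ h = k^-1)%g).

Local Open Scope group_scope.

Let m := (2 ^ u.+1 * 5 ^ b)%N.

Lemma hG : h \in G.
Proof. by have [_ HG _ _ _] := sdprod_context sdp; apply: (subsetP HG); rewrite eH cycle_id. Qed.

Lemma KG : K \subset G.
Proof. by have [/andP[]] := sdprod_context sdp. Qed.

Lemma tiKH : K :&: <[h]> = 1.
Proof. by have [_ _ _ _] := sdprod_context sdp; rewrite eH. Qed.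

Lemma conj_pow i k : k \in K -> k ^ (h ^+ i) = if odd i then k^-1 else k.
Proof.
elim: i k => [|i IH] k kK; first by rewrite expg0 conjg1.
rewrite expgS conjgM inv // IH ?groupV //=.
by case: (odd i); rewrite ?invgK.
Qed.

Lemma hk_swap i k : k \in K -> h ^+ i * k = (if odd i then k^-1 else k) * h ^+ i.
Proof.
move=> kK; set k' := (if odd i then k^-1 else k).
have k'K : k' \in K by rewrite /k'; case: (odd i); rewrite ?groupV.
have E : k' ^ (h ^+ i) = k.
  by rewrite conj_pow // /k'; case: (odd i); rewrite ?invgK.
by rewrite [RHS]conjgC E.
Qed.

Lemma decomp x : x \in G -> exists2 k, k \in K & exists i, x = k * h ^+ i.
Proof.
rewrite -(sdprodW sdp) => /mulsgP[k z kK]; rewrite eH => /cycleP[i ->] ->.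
by exists k => //; exists i.
Qed.

Lemma uniq_dec k1 k2 i j : k1 \in K -> k2 \in K ->
  k1 * h ^+ i = k2 * h ^+ j -> k1 = k2 /\ h ^+ i = h ^+ j.
Proof.
move=> k1K k2K E.
have E1 : k2^-1 * k1 = h ^+ j * (h ^+ i)^-1.
  by rewrite (canRL (mulgK (h ^+ i)) E) !mulgA mulVg mul1g.
have : k2^-1 * k1 \in K :&: <[h]>.
  by rewrite inE groupM ?groupV //= E1 groupM ?groupV ?mem_cycle.
rewrite tiKH => /set1P /eqP; rewrite -eq_mulVg1 => /eqP ek.
by subst k2; split=> //; apply: (mulgI k1).
Qed.

Lemma two_dvd_m : 2 %| m.
Proof. by rewrite /m expnS -mulnA dvdn_mulr. Qed.

Lemma par i j : h ^+ i = h ^+ j -> odd i = odd j.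
Proof.
move/eqP; rewrite eq_expg_mod_order oh -/m => /eqP E.
have : (i %% 2 = j %% 2)%N by rewrite -(modn_dvdm i two_dvd_m) E modn_dvdm // two_dvd_m.
by rewrite !modn2; case: (odd i); case: (odd j).
Qed.

Definition A := (K <*> <[h ^+ 2]>)%G.

Lemma cent2 : <[h ^+ 2]> \subset 'C(K).
Proof.
rewrite cycle_subG; apply/centP => k kK.
by rewrite /commute [RHS]conjgC conj_pow.
Qed.

Lemma Aeq : A = K * <[h ^+ 2]> :> {set gT}.
Proof. exact: cent_joinEr cent2. Qed.

Lemma memA x : x \in A -> exists2 k, k \in K & exists j, x = k * h ^+ (2 * j).
Proof.
rewrite Aeq => /mulsgP[k z kK /cycleP[j ->] ->].
by exists k => //; exists j; rewrite expgM.
Qed.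

Lemma inA k j : k \in K -> k * h ^+ (2 * j) \in A.
Proof.
move=> kK; rewrite groupM //; first exact: (subsetP (joing_subl _ _)).
by apply: (subsetP (joing_subr _ _)); rewrite expgM mem_cycle.
Qed.

Lemma notA k i : k \in K -> odd i -> k * h ^+ i \notin A.
Proof.
move=> kK oi; apply/negP => /memA[k' k'K [j E]].
have [_ /par] := uniq_dec kK k'K E.
by rewrite oi oddM.
Qed.

Lemma AG : A \subset G.
Proof. by rewrite join_subG KG cycle_subG groupX ?hG. Qed.

Lemma o2 : #[h ^+ 2] = (2 ^ u * 5 ^ b)%N.
Proof. by rewrite orderXdiv oh ?two_dvd_m // expnS -mulnA mulKn. Qed.

Lemma cop3 : coprime 3 (2 ^ u * 5 ^ b).
Proof. by rewrite coprimeMr !coprimeXr. Qed.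

Lemma cycA : cyclic A.
Proof.
apply: cyclicY; rewrite ?cycle_cyclic ?cent2 //.
  by apply: prime_cyclic; rewrite oK.
by rewrite oK -orderE o2 cop3.
Qed.

Lemma cardA : #|A| = (3 * (2 ^ u * 5 ^ b))%N.
Proof.
rewrite Aeq TI_cardMg ?oK -?orderE ?o2 //.
by apply: coprime_TIg; rewrite oK -orderE o2 cop3.
Qed.


Lemma powx k j s : k \in K -> odd j ->
  (k * h ^+ j) ^+ s = (if odd s then k else 1) * h ^+ (j * s).
Proof.
move=> kK oj; elim: s => [|s IH]; first by rewrite expg0 muln0 expg0 mulg1.
rewrite expgSr IH -mulgA (mulgA (h ^+ (j * s))) hk_swap // oddM oj /=.
rewrite -mulgA -expgD mulgA addnC -mulnS.
by case: (odd s); rewrite ?mulgV ?mul1g.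
Qed.

Lemma dvd5 a : a <= b -> 5 ^ a %| m.
Proof. by move=> ab; rewrite /m dvdn_mull // dvdn_exp2l. Qed.

Lemma ord5 a : a <= b -> #[h ^+ (5 ^ a)] = (m %/ 5 ^ a)%N.
Proof. by move=> ab; rewrite orderXdiv oh // dvd5. Qed.

Lemma injaux k1 k2 a1 a2 : k1 \in K -> k2 \in K ->
  k1 * h ^+ (5 ^ a1) \in <[k2 * h ^+ (5 ^ a2)]> ->
  k1 = k2 /\ h ^+ (5 ^ a1) \in <[h ^+ (5 ^ a2)]>.
Proof.
move=> k1K k2K /cycleP[s]; rewrite powx // ?oddX ?orbT //.
case os: (odd s) => E.
  have [-> E2] := uniq_dec k1K k2K E.
  by split => //; rewrite E2 expgM mem_cycle.
have [_ /par] := uniq_dec k1K (group1 K) E.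
by rewrite !oddX oddM oddX os !orbT andbF.
Qed.

Definition gmap (p : gT * 'I_b.+1) := <[p.1 * h ^+ (5 ^ p.2)]>%G.

Lemma S2eq : [set C : {group gT} | (C \subset G) && cyclic C] :\: [set C : {group gT} | C \subset A]
   = gmap @: setX K [set: 'I_b.+1].
Proof.
apply/setP => C; rewrite !inE; apply/idP/imsetP => [|[[k a] pD ->]].
  case/andP => nCA /andP[CG /cyclicP[x defC]].
  have xG : x \in G by apply: (subsetP CG); rewrite defC cycle_id.
  have [k kK [i defx]] := decomp xG; subst x; clear xG.
  have oi : odd i.
    apply/negPn/negP => ei; move/negP: nCA; apply; rewrite defC cycle_subG.
    have -> : i = (2 * i./2)%N by rewrite mul2n -{1}(odd_double_half i) (negbTE ei).
    exact: inA.
  have m0 : (0 < m)%N by rewrite /m muln_gt0 !expn_gt0.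
  have i0 : (0 < i)%N by case: i oi {defC}.
  have gdv : gcdn i m %| 5 ^ b.
    rewrite -(@Gauss_dvdr _ (2 ^ u.+1)) ?dvdn_gcdr //.
    rewrite coprime_sym coprimeXl // coprime2n.
    case/dvdnP: (dvdn_gcdl i m) => q iq.
    by move: oi; rewrite {1}iq oddM => /andP[].
  have [a ab ga] := @dvdn_pfactor 5 _ b (isT : prime 5) gdv.
  have l1 : (a < b.+1)%N by [].
  exists (k, Ordinal l1); first by rewrite in_setX kK inE.
  apply: val_inj; rewrite /gmap /= defC.
  have d5i : 5 ^ a %| i by rewrite -ga dvdn_gcdl.
  set t := (i %/ 5 ^ a)%N.
  have it : i = (5 ^ a * t)%N by rewrite mulnC divnK.
  have ot : odd t by move: oi; rewrite it oddM oddX orbT.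
  apply/eqP; rewrite eqEsubset !cycle_subG; apply/andP; split.
    by apply/cycleP; exists t; rewrite powx ?oddX ?orbT // ot -it.
  set w := h ^+ (5 ^ a).
  have ow : #[w] = (m %/ 5 ^ a)%N by apply: ord5.
  have hi : h ^+ i = w ^+ t by rewrite it expgM.
  have cop : coprime #[w] t.
    rewrite ow /coprime gcdnC.
    have d5m : 5 ^ a %| m by apply: dvd5.
    have p5 : (0 < 5 ^ a)%N by rewrite expn_gt0.
    rewrite -(eqn_pmul2l p5) muln1 muln_gcdr -it [(5 ^ a * _)%N]mulnC divnK //.
    by rewrite ga.
  have : generator <[w]> (w ^+ t) by rewrite generator_coprime.
  rewrite /generator => /eqP ew.
  have : w \in <[h ^+ i]> by rewrite hi -ew cycle_id.
  case/cycleP => s; rewrite -expgM => ews.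
  have os : odd s.
    by move: (par ews); rewrite oddX orbT oddM oi.
  by apply/cycleP; exists s; rewrite powx // os -ews.
rewrite in_setX !inE in pD; case/andP: pD => kK _.
rewrite cycle_subG notA ?oddX ?orbT //= cycle_subG groupM ?groupX ?hG ?cycle_cyclic //.
by rewrite (subsetP KG).
Qed.

Lemma S2card : #|[set C : {group gT} | (C \subset G) && cyclic C] :\: [set C : {group gT} | C \subset A]|
  = (3 * b.+1)%N.
Proof.
rewrite S2eq card_in_imset; first by rewrite cardsX oK cardsT card_ord.
move=> [k1 a1] [k2 a2]; rewrite !in_setX !inE /= => /andP[k1K _] /andP[k2K _].
move/(congr1 val); rewrite /gmap /= => E.
have x1 : k1 * h ^+ (5 ^ a1) \in <[k2 * h ^+ (5 ^ a2)]> by rewrite -E cycle_id.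
have x2 : k2 * h ^+ (5 ^ a2) \in <[k1 * h ^+ (5 ^ a1)]> by rewrite E cycle_id.
have [ek1 i1] := injaux k1K k2K x1.
have [_ i2] := injaux k2K k1K x2.
have Ec : <[h ^+ (5 ^ a1)]> = <[h ^+ (5 ^ a2)]>.
  by apply/eqP; rewrite eqEsubset !cycle_subG i1 i2.
have := congr1 (fun X : {set gT} => #|X|) Ec; rewrite -!orderE (ord5 (ltn_ord a1)) (ord5 (ltn_ord a2)).
move=> eq; subst k2; congr pair; apply: ord_inj.
have d1 := dvd5 (ltn_ord a1); have d2 := dvd5 (ltn_ord a2).
have q0 : (0 < m %/ 5 ^ a1)%N.
  by rewrite divn_gt0 ?expn_gt0 // dvdn_leq // /m muln_gt0 !expn_gt0.
apply: (@expnI 5) => //.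
have : (m %/ 5 ^ a1 * 5 ^ a1 = m %/ 5 ^ a1 * 5 ^ a2)%N by rewrite divnK // eq divnK.
by move/eqP; rewrite eqn_pmul2l // => /eqP.
Qed.


Lemma count_main : ncyclic G = (ndivisors #|G| + b.+1)%N.
Proof.
rewrite /ncyclic -(cardsID [set C : {group gT} | C \subset A]) S2card.
have -> : [set H0 : {group gT} | (H0 \subset G) && cyclic H0] :&: [set C : {group gT} | C \subset A]
   = [set C : {group gT} | C \subset A].
  apply/setP => C; rewrite !inE; case CA: (C \subset A); rewrite ?andbF //=.
  by rewrite (subset_trans CA AG) (cyclicS CA cycA).
rewrite ncyc_sub ?cycA // -ndivE ?cardA ?muln_gt0 ?expn_gt0 // ndiv_formula.
have -> : #|G| = (3 * (2 ^ u.+1 * 5 ^ b))%N by rewrite -(sdprod_card sdp) oK eH -orderE oh.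
rewrite ndiv_formula; lia.
Qed.

End Count.



Definition i0 : 'I_3 := @Ordinal 3 0 isT.
Definition i1 : 'I_3 := @Ordinal 3 1 isT.
Definition i2 : 'I_3 := @Ordinal 3 2 isT.
Definition cc : {perm 'I_3} := (tperm i0 i1 * tperm i1 i2)%g.
Definition tt : {perm 'I_3} := tperm i1 i2.
Ltac pcase := apply/permP; case => [[|[|[|]]] ?]; rewrite ?expgS ?expg0 ?mulg1 /conjg ?tpermV ?permM ?permE /=;
  try done; apply/val_inj; done.
Lemma c3 : (cc ^+ 3 = 1)%g. Proof. pcase. Qed.
Lemma t2 : (tt ^+ 2 = 1)%g. Proof. pcase. Qed.
Lemma c1 : (cc != 1)%g. Proof. apply/eqP => /permP /(_ i0). rewrite !permM !permE /=. by []. Qed.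
Lemma cj : (cc ^ tt = cc^-1)%g.
Proof. apply/esym/eqP; rewrite eq_invg_mul. apply/eqP. rewrite /cc /tt /conjg !tpermV. pcase. Qed.

Section Exist.
Local Open Scope group_scope.
Variables (u b : nat).
Let m := (2 ^ u.+1 * 5 ^ b)%N.
Let gT := ({perm 'I_3} * 'Z_m)%type.

Lemma pairX (x : {perm 'I_3}) (y : 'Z_m) n : ((x, y) : gT) ^+ n = (x ^+ n, y ^+ n).
Proof. by elim: n => // n IH; rewrite !expgS IH. Qed.

Lemma m1 : (1 < m)%N.
Proof. rewrite /m expnS -mulnA; have p : (0 < 2 ^ u * 5 ^ b)%N by rewrite muln_gt0 !expn_gt0. lia. Qed.

Lemma oZ : #[Zp1 : 'Z_m] = m.
Proof. by rewrite order_Zp1 Zp_cast // m1. Qed.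

Definition kk : gT := (cc, 1).
Definition hh : gT := (tt, Zp1).

Lemma okk : #[kk] = 3.
Proof.
apply: nt_prime_order => //; first by rewrite /kk pairX c3 expg1n.
by apply/eqP => /(congr1 fst) /= /eqP; rewrite (negbTE c1).
Qed.

Lemma ohh : #[hh] = m.
Proof.
apply/eqP; rewrite eqn_dvd; apply/andP; split.
  rewrite order_dvdn /hh pairX.
  have -> : tt ^+ m = 1 by rewrite /m expnS -mulnA expgM t2 expg1n.
  have zm : (Zp1 : 'Z_m) ^+ m = 1 by apply/eqP; rewrite -order_dvdn oZ.
  by rewrite zm.
suff : #[Zp1 : 'Z_m] %| #[hh] by rewrite oZ.
rewrite order_dvdn.
have := expg_order hh; rewrite {1}/hh pairX => /(congr1 snd) /= ->.
by [].
Qed.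

Lemma kkh : kk ^ hh = kk^-1.
Proof.
have -> : kk ^ hh = (cc ^ tt, 1 ^ Zp1) by [].
have E : ((cc, 1) : gT)^-1 = (cc^-1, 1^-1) by []. by rewrite cj conj1g /kk E invg1.
Qed.

Definition KK := <[kk]>%G.
Definition HH := <[hh]>%G.
Definition GG := (KK <*> HH)%G.

Lemma exist_ok : inv_sdprod_C3 GG KK HH hh m.
Proof.
have cop : coprime 3 m by rewrite /m coprimeMr !coprimeXr.
split.
  apply: sdprodEY.
    rewrite cycle_subG inE /= -cycleJ kkh cycleV subxx //.
  by apply: coprime_TIg; rewrite -!orderE okk ohh.
split; first exact: cycle_cyclic.
split; first by rewrite -orderE okk.
split; first by [].
split; first exact: ohh.
move=> k /cycleP[i ->]; by rewrite conjXg kkh expgVn.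
Qed.

End Exist.

Theorem mainTheorem15 (gamma : nat) (hgamma : 0 < gamma) :
  (* infinitely many (pairwise non-isomorphic) finite groups: unbounded orders *)
  (forall N : nat, exists (gT : finGroupType) (G : {group gT}),
      N < #|G| /\ ncyclic G = ndivisors #|G| + gamma)
  /\
  (* the explicit family C_3 ><| C_(2^u 5^(gamma-1)), inversion action *)
  (forall u : nat, 0 < u ->
     (exists (gT : finGroupType) (G K H : {group gT}) (h : gT),
         inv_sdprod_C3 G K H h (2 ^ u * 5 ^ (gamma - 1)))
     /\
     (forall (gT : finGroupType) (G K H : {group gT}) (h : gT),
         inv_sdprod_C3 G K H h (2 ^ u * 5 ^ (gamma - 1)) ->
         ncyclic G = ndivisors #|G| + gamma)).
Proof.
case: gamma hgamma => // b _; rewrite subn1 /=.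
have gen : forall u (gT : finGroupType) (G K H : {group gT}) (h : gT),
    inv_sdprod_C3 G K H h (2 ^ u.+1 * 5 ^ b) ->
    ncyclic G = ndivisors #|G| + b.+1 /\ #|G| = 3 * (2 ^ u.+1 * 5 ^ b).
  move=> u gT G K H h [sdp [_ [oK [eH [oh inv]]]]]; split.
    exact: (count_main sdp oK eH oh inv).
  by rewrite -(sdprod_card sdp) oK eH -orderE oh.
split.
  move=> N; have [E1 E2] := gen N _ _ _ _ _ (exist_ok N b).
  exists _, (GG N b); split => //; rewrite E2.
  have h1 := ltn_expl N.+1 (isT : 1 < 2).
  have h2 : 0 < 5 ^ b by rewrite expn_gt0.
  have h3 : 2 ^ N.+1 <= 2 ^ N.+1 * 5 ^ b by rewrite leq_pmulr.
  lia.
case=> // u _; split; first by exists _, (GG u b), (KK u b), (HH u b), (hh u b); exact: exist_ok.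
by move=> gT G K H h /gen [].
Qed.
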